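(* Let $S$ and $T$ be Polish spaces, $\Delta_\infty=\{(w_j)_{j\ge1}:w_j\ge0,\ \sum_jw_j=1\}$, and let $G$ be a probability kernel from $S$ into $T$ such that $G(\cdot\mid s_n)\to G(\cdot\mid s)$ weakly whenever $s_n\to s$ in $S$. Then the mapping $[(s_1,s_2,\dots),(w_1,w_2,\dots)]\mapsto\sum_{j\ge1}w_jG(\cdot\mid s_j)$ from $S^\infty\times\Delta_\infty$ (product topology) into the space $\mathcal{P}(T)$ of probability measures on $T$ (weak topology) is continuous. *)

(* Defs.v *)
From HB Require Import structures.
From mathcomp Require Import all_boot all_order all_algebra.
From mathcomp Require Import all_classical all_reals all_analysis.
Set Implicit Arguments. Unset Strict Implicit. Unset Printing Implicit Defensive.
Import Order.TTheory GRing.Theory Num.Theory.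
Import numFieldNormedType.Exports.
Local Open Scope classical_set_scope.
Local Open Scope ring_scope.

Definition separable_space (T : topologicalType) : Prop :=
  exists D : set T, countable D /\ closure D = setT.

Definition completely_metrizable (R : realType) (T : topologicalType) : Prop :=
  exists dist : T -> T -> R,
    [/\ (forall x y, dist x y = 0 <-> x = y),
        (forall x y, dist x y = dist y x),
        (forall x y z, dist x z <= dist x y + dist y z),
        (forall x, nbhs x = filter_from [set e : R | 0 < e]
                                        (fun e => [set y | dist x y < e])) &
        (forall u : nat -> T,
            (forall e : R, 0 < e -> exists N : nat, forall m n : nat,
                 (N <= m)%N -> (N <= n)%N -> dist (u m) (u n) < e) ->
            exists x : T, u @ \oo --> x)].

Definition polish (R : realType) (T : topologicalType) : Prop :=
  separable_space T /\ completely_metrizable R T.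

Definition Borel (T : ptopologicalType) : measurableType _ := g_sigma_algebraType (@open T).

Definition simplex_inf (R : realType) : set (nat -> R) :=
  [set w : nat -> R | (forall j, 0 <= w j) /\ (fun n : nat => \sum_(j < n) w j) @ \oo --> (1 : R)].

Definition mixture (R : realType) (S T : ptopologicalType)
  (G : R.-pker (Borel S) ~> (Borel T)) (p : (nat -> S) * (nat -> R))
  : set (Borel T) -> \bar R :=
  fun B => (\sum_(0 <= j <oo) ((p.2 j)%:E * G (p.1 j) B))%E.

Definition bounded_continuous (R : realType) (T : topologicalType) (f : T -> R) :=
  continuous f /\ exists M : R, forall x, `|f x| <= M.

(* Main.v *)
Require Import Defs.
From HB Require Import structures.
From mathcomp Require Import all_boot all_order all_algebra.
From mathcomp Require Import all_classical all_reals all_analysis.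
From mathcomp Require Import lra measurable_realfun.
Import Order.TTheory GRing.Theory Num.Theory.
Import numFieldNormedType.Exports.
Local Open Scope classical_set_scope.
Local Open Scope ring_scope.

Lemma cont_meas (R : realType) (T : ptopologicalType) (f : Borel T -> R) :
  continuous (f : T -> R) -> measurable_fun setT f.
Proof.
move=> cf; apply: (measurability _ (measurable_realfun.RGenOpens.measurableE R)).
move=> _ [_ [a [b ->] <-]]; apply: sub_sigma_algebra.
rewrite setTI; move/continuousP: cf; apply.
exact: interval_open.
Qed.

Lemma int_bnd (R : realType) (T : ptopologicalType) (mu : {measure set (Borel T) -> \bar R})
  (g : Borel T -> \bar R) (M : R) :
  (mu setT = 1)%E ->
  measurable_fun [set: Borel T] g -> (forall x, (0 <= g x <= M%:E)%E) ->
  (0 <= \int[mu]_x g x <= M%:E)%E.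
Proof.
move=> h1 mg gM; apply/andP; split.
  by apply: integral_ge0 => x _; have /andP[] := gM x.
apply: (@le_trans _ _ (\int[mu]_x (cst M%:E) x)%E).
  apply: ge0_le_integral => //;
    try by move=> x _; have /andP[k1 k2] := gM x; rewrite //= ?(le_trans k1 k2).
rewrite integral_cst //.
rewrite [X in (_ * X)%E](_ : _ = 1%E) ?mule1 //.
Qed.

Lemma pos_bnd (R : realType) (T : Type) (f : T -> R) (M : R) :
  (forall x, `|f x| <= M) -> forall x,
  (0 <= (EFin \o f)^\+ x <= M%:E)%E /\ (0 <= (EFin \o f)^\- x <= M%:E)%E.
Proof.
move=> fM x; have := fM x; rewrite ler_norml => /andP[h1 h2].
have M0 : 0 <= M by apply: (le_trans (normr_ge0 (f x)) (fM x)).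
rewrite funeposE funenegE /=; split; apply/andP; split.
- by rewrite le_max lexx orbT.
- by rewrite ge_max !lee_fin h2 M0.
- by rewrite le_max lexx orbT.
- by rewrite ge_max !lee_fin lerNl h1 M0.
Qed.
Lemma ser (R : realType) (c w : nat -> R) (M : R) : 0 <= M ->
  (forall n, 0 <= c n) -> (forall n, c n <= M * w n) -> (forall n, 0 <= w n) ->
  (fun n => \sum_(j < n) w j) @ \oo --> (1:R) ->
  exists L : R, (\sum_(0 <= n <oo) (c n)%:E)%E = L%:E /\
    forall N, 0 <= L - \sum_(j < N) c j <= M * (1 - \sum_(j < N) w j).
Proof.
move=> M0 c0 cw w0 hW.
set W := fun n => \sum_(j < n) w j.
set A := fun n => \sum_(j < n) c j.
set D := fun n => M * W n - A n.
have And : nondecreasing_seq A.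
  by apply/nondecreasing_seqP => n; rewrite /A big_ord_recr /= lerDl.
have Wnd : nondecreasing_seq W.
  by apply/nondecreasing_seqP => n; rewrite /W big_ord_recr /= lerDl.
have W1 n : W n <= 1.
  by have := nondecreasing_cvgn_le Wnd (cvgP _ hW) n; rewrite (cvg_lim _ hW).
have Dnd : nondecreasing_seq D.
  apply/nondecreasing_seqP => n; rewrite /D /W /A !big_ord_recr /= mulrDr.
  by rewrite opprD addrACA lerDl subr_ge0.
have D0 n : 0 <= D n.
  have -> : 0 = D 0%N by rewrite /D /W /A !big_ord0 mulr0 subr0.
  exact: Dnd.
have cA : cvgn A.
  apply: nondecreasing_is_cvgn => //; exists M => _ [n _ <-].
  have := D0 n; rewrite /D subr_ge0 => /le_trans; apply.
  by rewrite ler_piMr.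
have cD : D @ \oo --> M * 1 - limn A.
  apply: cvgB => //; apply: cvgM => //; exact: cvg_cst.
exists (limn A); split.
  rewrite -EFin_lim //; congr (limn _); apply/funext => n /=.
  by rewrite sumEFin big_mkord.
move=> N; apply/andP; split.
  by rewrite subr_ge0; exact: nondecreasing_cvgn_le.
have := nondecreasing_cvgn_le Dnd (cvgP _ cD) N.
rewrite (cvg_lim _ cD) // /D mulr1 mulrBr.
rewrite /A /W => h; lra.
Qed.
Lemma mix_int (R : realType) (S T : ptopologicalType)
  (G : R.-pker (Borel S) ~> (Borel T)) (p : (nat -> S) * (nat -> R))
  (hw : forall j, 0 <= p.2 j) (g : Borel T -> \bar R) :
  measurable_fun [set: Borel T] (g : Borel T -> \bar R) -> (forall x, (0 <= g x)%E) ->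
  (\int[mixture G p]_x g x = \sum_(0 <= n <oo) ((p.2 n)%:E * \int[G (p.1 n)]_x g x))%E.
Proof.
move=> mg g0.
have -> : mixture G p = mseries (fun j => mscale (NngNum (hw j)) (G (p.1 j))) 0.
  by apply/funext => B.
rewrite ge0_integral_measure_series //.
apply: eq_eseriesr => n _; rewrite ge0_integral_mscale //.
Qed.

Section Mix.
Variables (R : realType) (S T : ptopologicalType) (G : R.-pker (Borel S) ~> (Borel T)).
Variables (f : T -> R) (M : R).
Hypotheses (cf : continuous f) (fM : forall x, `|f x| <= M).

Let fE := fun x : Borel T => (f x)%:E.

Let mfE : measurable_fun [set: Borel T] fE.
Proof. by apply/measurable_EFinP; exact: cont_meas. Qed.

Let M0 : 0 <= M.
Proof. have x : T := point. exact: (le_trans (normr_ge0 (f x)) (fM x)). Qed.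

Definition apos (s : S) := fine (\int[G s]_x (fE^\+ x))%E.
Definition aneg (s : S) := fine (\int[G s]_x (fE^\- x))%E.
Definition hh (s : S) := apos s - aneg s.

Lemma apos_E s : (\int[G s]_x (fE^\+ x))%E = (apos s)%:E /\ 0 <= apos s <= M.
Proof.
have /andP[h1 h2] := @int_bnd _ _ (G s) _ M (prob_kernel s) (measurable_funepos mfE) (fun x => (@pos_bnd _ _ _ _ fM x).1).
have fin : (\int[G s]_x (fE^\+ x))%E \is a fin_num.
  by rewrite ge0_fin_numE // (le_lt_trans h2) // ltry.
rewrite /apos fineK //; split => //.
by rewrite -!lee_fin fineK // h1 h2.
Qed.

Lemma aneg_E s : (\int[G s]_x (fE^\- x))%E = (aneg s)%:E /\ 0 <= aneg s <= M.
Proof.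
have /andP[h1 h2] := @int_bnd _ _ (G s) _ M (prob_kernel s) (measurable_funeneg mfE) (fun x => (@pos_bnd _ _ _ _ fM x).2).
have fin : (\int[G s]_x (fE^\- x))%E \is a fin_num.
  by rewrite ge0_fin_numE // (le_lt_trans h2) // ltry.
rewrite /aneg fineK //; split => //.
by rewrite -!lee_fin fineK // h1 h2.
Qed.

Lemma intG s : (\int[G s]_x (f x)%:E)%E = (hh s)%:E.
Proof.
by rewrite integralE (apos_E s).1 (aneg_E s).1 /hh EFinB.
Qed.

Lemma mixE (p : (nat -> S) * (nat -> R)) : simplex_inf p.2 ->
  exists L : R, (\int[mixture G p]_x (f x)%:E)%E = L%:E /\
    forall N, `|L - \sum_(j < N) p.2 j * hh (p.1 j)| <= 2 * M * (1 - \sum_(j < N) p.2 j).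
Proof.
case=> w0 w1.
have [La [eLa bLa]] := @ser R (fun n => p.2 n * apos (p.1 n)) p.2 M M0
  (fun n => mulr_ge0 (w0 n) (andP (apos_E (p.1 n)).2).1)
  (fun n => ltac:(rewrite mulrC; apply: ler_wpM2l => //; exact: (andP (apos_E (p.1 n)).2).2))
  w0 w1.
have [Lb [eLb bLb]] := @ser R (fun n => p.2 n * aneg (p.1 n)) p.2 M M0
  (fun n => mulr_ge0 (w0 n) (andP (aneg_E (p.1 n)).2).1)
  (fun n => ltac:(rewrite mulrC; apply: ler_wpM2l => //; exact: (andP (aneg_E (p.1 n)).2).2))
  w0 w1.
exists (La - Lb); split.
  have -> : mixture G p = mseries (fun j => mscale (NngNum (w0 j)) (G (p.1 j))) 0.
    by apply/funext => B.
  rewrite integralE.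
  rewrite ge0_integral_measure_series //; last exact: measurable_funepos.
  rewrite ge0_integral_measure_series //; last exact: measurable_funeneg.
  rewrite EFinB -eLa -eLb; congr (_ - _)%E.
    apply: eq_eseriesr => n _; rewrite ge0_integral_mscale //; last exact: measurable_funepos.
    by rewrite (apos_E _).1 EFinM.
  apply: eq_eseriesr => n _; rewrite ge0_integral_mscale //; last exact: measurable_funeneg.
  by rewrite (aneg_E _).1 EFinM.
move=> N.
have -> : \sum_(j < N) p.2 j * hh (p.1 j) =
    \sum_(j < N) p.2 j * apos (p.1 j) - \sum_(j < N) p.2 j * aneg (p.1 j).
  by rewrite -sumrB; apply: eq_bigr => j _; rewrite /hh mulrBr.
have /andP[a1 a2] := bLa N; have /andP[b1 b2] := bLb N.
rewrite ler_norml; apply/andP; split; lra.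
Qed.

Lemma hh_cont (dist : S -> S -> R)
  (hnb : forall x, nbhs x = filter_from [set e : R | 0 < e]
                                        (fun e => [set y | dist x y < e]))
  (HGf : forall (u : nat -> S) (s : S), u @ \oo --> s ->
        (fun n => \int[G (u n)]_x (f x)%:E)%E @ \oo --> (\int[G s]_x (f x)%:E)%E) :
  forall s, hh @ s --> hh s.
Proof.
move=> s; apply/cvgrPdist_lt => e e0.
apply: contrapT => Hn.
have H n : exists t, dist s t < n.+1%:R^-1 /\ ~ (`|hh s - hh t| < e).
  apply: contrapT => nex; apply: Hn.
  suff K : nbhs s (fun t => `|hh s - hh t| < e) by exact: K.
  rewrite hnb.
  exists (n.+1%:R^-1) => //= t dt; apply: contrapT => nPt; apply: nex.
  by exists t.
have [u hu] := choice H.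
have cu : u @ \oo --> s.
  move=> Q HQ; have HQ' : nbhs s Q := HQ.
  rewrite hnb in HQ'; case: HQ' => d /= d0 hd.
  have := near_infty_natSinv_lt (PosNum d0).
  apply: filterS => n /= hn; apply: hd => /=.
  exact: lt_trans (hu n).1 hn.
have := HGf u s cu.
rewrite intG (_ : (fun n => _) = (fun n => (hh (u n))%:E)); last first.
  by apply/funext => n; rewrite intG.
move/fine_cvg => /cvgrPdist_lt /(_ e e0) [N _ hN].
by apply: (hu N).2; exact: (hN N (leqnn N)).
Qed.

End Mix.
Lemma cvg_bigsum (R : realType) (U : Type) (F : set_system U) {FF : Filter F}
  (g : nat -> U -> R) (a : nat -> R) N :
  (forall j, g j @ F --> a j) -> (fun x => \sum_(j < N) g j x) @ F --> \sum_(j < N) a j.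
Proof.
move=> hg; elim: N => [|N IH].
  rewrite big_ord0; under eq_fun do rewrite big_ord0; exact: cvg_cst.
rewrite big_ord_recr /=; under eq_fun do rewrite big_ord_recr /=.
exact: cvgD.
Qed.

Lemma coord2 (R : realType) (S : topologicalType) (p0 : {ptws nat -> S} * {ptws nat -> R}) j :
  (fun p : {ptws nat -> S} * {ptws nat -> R} => p.2 j) @ p0 --> p0.2 j.
Proof.
apply: (@cvg_comp _ _ _ snd (fun g => g j) _ (nbhs p0.2)); first exact: cvg_snd.
exact: (@proj_continuous nat (fun _ => R^o) j p0.2).
Qed.

Lemma coord1 (R : realType) (S : topologicalType) (p0 : {ptws nat -> S} * {ptws nat -> R}) j :
  (fun p : {ptws nat -> S} * {ptws nat -> R} => p.1 j) @ p0 --> p0.1 j.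
Proof.
apply: (@cvg_comp _ _ _ fst (fun g => g j) _ (nbhs p0.1)); first exact: cvg_fst.
exact: (@proj_continuous nat (fun _ => S) j p0.1).
Qed.

Theorem corollary7 (R : realType) (S T : ptopologicalType)
  (polS : polish R S) (polT : polish R T)
  (G : R.-pker (Borel S) ~> (Borel T))
  (HG : forall (u : nat -> S) (s : S), u @ \oo --> s ->
        forall f : T -> R, bounded_continuous f ->
        (fun n => \int[G (u n)]_x (f x)%:E)%E @ \oo
          --> (\int[G s]_x (f x)%:E)%E) :
  forall f : T -> R, bounded_continuous f ->
    {within [set p : {ptws nat -> S} * {ptws nat -> R} | simplex_inf p.2],
      continuous (fun p : {ptws nat -> S} * {ptws nat -> R} =>
                    (\int[mixture G p]_x (f x)%:E)%E)}.
Proof.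
move=> f [cf [M fM]].
have [_ [dist [_ _ _ hnb _]]] := polS.
have HGf : forall (u : nat -> S) (s : S), u @ \oo --> s ->
        (fun n => \int[G (u n)]_x (f x)%:E)%E @ \oo --> (\int[G s]_x (f x)%:E)%E.
  by move=> u s us; apply: HG => //; split => //; exists M.
have hc := @hh_cont R S T G f M cf fM dist hnb HGf.
have M0 : 0 <= M by have x : T := point; exact: (le_trans (normr_ge0 (f x)) (fM x)).
apply/subspace_continuousP => p0 Ap0.
have [L0 [e0 b0]] := @mixE R S T G f M cf fM _ Ap0.
rewrite /from_subspace /= e0; apply: cvg_EFin.
  rewrite near_withinE; apply: nearW => p Ap.
  by have [L [-> _]] := @mixE R S T G f M cf fM _ Ap.
apply/cvgrPdist_lt => e e_gt0.
set d := e / (6 * M + 2).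
have d0 : 0 < d by rewrite divr_gt0 //; lra.
have de : d * (6 * M + 2) = e by rewrite /d mulrVK // unitfE; lra.
have [N _ hN] := (cvgrPdist_lt _ _).1 Ap0.2 d d0.
have hN1 := hN N (leqnn N).
have cW : (fun p : {ptws nat -> S} * {ptws nat -> R} => \sum_(j < N) p.2 j) @ nbhs p0
    --> \sum_(j < N) p0.2 j.
  exact: (@cvg_bigsum R _ (nbhs p0) _ (fun j (p : {ptws nat -> S} * {ptws nat -> R}) => p.2 j)
    (fun j => p0.2 j) N (fun j => @coord2 R S p0 j)).
have cS : (fun p : {ptws nat -> S} * {ptws nat -> R} =>
     \sum_(j < N) p.2 j * hh R S T G f (p.1 j)) @ nbhs p0
    --> \sum_(j < N) p0.2 j * hh R S T G f (p0.1 j).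
  apply: (@cvg_bigsum R _ (nbhs p0) _ (fun j (p : {ptws nat -> S} * {ptws nat -> R}) => p.2 j * hh R S T G f (p.1 j))
    (fun j => p0.2 j * hh R S T G f (p0.1 j)) N) => j; apply: cvgM; first exact: (@coord2 R S p0 j).
  exact: (cvg_comp _ _ (@coord1 R S p0 j) (hc (p0.1 j))).
have K1 := (cvgrPdist_lt _ _).1 cW d d0.
have K2 := (cvgrPdist_lt _ _).1 cS d d0.
rewrite near_withinE; near=> p => Ap.
have h1 : `|\sum_(j < N) p0.2 j - \sum_(j < N) p.2 j| < d by near: p; exact: K1.
have h2 : `|\sum_(j < N) p0.2 j * hh R S T G f (p0.1 j) - \sum_(j < N) p.2 j * hh R S T G f (p.1 j)| < d.
  by near: p; exact: K2.
have [L [eL bL]] := @mixE R S T G f M cf fM _ Ap.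
rewrite /= eL /=.
have t1 := bL N; have t2 := b0 N.
move: t1 t2 h1 h2 hN1; rewrite !ler_norml !ltr_norml => /andP[a1 a2] /andP[a3 a4] /andP[a5 a6] /andP[a7 a8] /andP[a9 a10].
apply/andP; split; nra.
Unshelve. all: by end_near.
Qed.
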